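(* Let $k, n \in \mathbb{N}$ with $k$ odd and $k \le 2n$. Color every edge of the complete bipartite graph $K_{2n,2n}$ red or blue so that every vertex is incident with exactly $n$ red edges and exactly $n$ blue edges. Then $K_{2n,2n}$ has a perfect matching consisting of exactly $k$ red edges and $2n-k$ blue edges if and only if the graph of blue edges is connected.
   Context: The graph of blue edges is the spanning subgraph of $K_{2n,2n}$ on all $4n$ vertices whose edge set is the set of blue edges. *)

(* Defs.v *)
From mathcomp Require Import all_boot all_fingroup.
Set Implicit Arguments. Unset Strict Implicit. Unset Printing Implicit Defensive.

(* K_{2n,2n}: left part 'I_(2n), right part 'I_(2n); the edge {i (left), j (right)}
   has colour [red i j] (true = red, false = blue). *)

Definition balanced (n : nat) (red : 'I_(2 * n) -> 'I_(2 * n) -> bool) : Prop :=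
  (forall i : 'I_(2 * n), #|[set j | red i j]| = n /\ #|[set j | ~~ red i j]| = n) /\
  (forall j : 'I_(2 * n), #|[set i | red i j]| = n /\ #|[set i | ~~ red i j]| = n).

(* vertex set of K_{2n,2n}: inl = left vertices, inr = right vertices *)
Definition vtx (n : nat) : finType := ('I_(2 * n) + 'I_(2 * n))%type.

Definition blue_adj (n : nat) (red : 'I_(2 * n) -> 'I_(2 * n) -> bool) : rel (vtx n) :=
  fun x y => match x, y with
             | inl i, inr j => ~~ red i j
             | inr j, inl i => ~~ red i j
             | _, _ => false
             end.

Definition blue_connected (n : nat) (red : 'I_(2 * n) -> 'I_(2 * n) -> bool) : Prop :=
  forall x y : vtx n, connect (blue_adj red) x y.

(* a perfect matching of K_{2n,2n} is given by a bijection s from left to right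
   (edges {i, s i}); it has exactly k red edges (hence 2n-k blue edges) *)
Definition matching_with_k_red (n k : nat) (red : 'I_(2 * n) -> 'I_(2 * n) -> bool)
  (s : 'S_(2 * n)) : Prop :=
  #|[set i | red i (s i)]| = k /\ #|[set i | ~~ red i (s i)]| = 2 * n - k.

(* Main.v *)
Require Import Defs.
From mathcomp Require Import all_boot all_fingroup.
From mathcomp Require Import zify.
Set Implicit Arguments. Unset Strict Implicit. Unset Printing Implicit Defensive.
Definition fcnt n (c : 'I_(2 * n) -> 'I_(2 * n) -> bool) (s : 'S_(2 * n)) :=
  #|[set i | c i (s i)]|.

Lemma card_set_sum (T : finType) (P : pred T) :
  #|[set x | P x]| = \sum_x (P x : nat).
Proof.
rewrite -sum1_card big_mkcond /=; apply: eq_bigr => x _; rewrite inE; by case: (P x).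
Qed.

Lemma card_perm_set m (P : pred 'I_m) (s : 'S_m) :
  #|[set x | P (s x)]| = #|[set x | P x]|.
Proof.
have -> : [set x | P (s x)] = s @^-1: [set x | P x] by apply/setP => x; rewrite !inE.
apply: card_preimset; exact: perm_inj.
Qed.

Lemma sum2 m (F : 'I_m -> nat) a b : a != b ->
  \sum_x F x = F a + F b + \sum_(x | (x != a) && (x != b)) F x.
Proof.
move=> ab; rewrite (bigD1 a) //= (bigD1 b) //=; last by rewrite eq_sym.
by rewrite addnA; congr (_ + _ + _); apply: eq_bigl => x; rewrite andbC.
Qed.

Lemma sum3 m (F : 'I_m -> nat) a b d : a != b -> a != d -> b != d ->
  \sum_x F x = F a + F b + F d + \sum_(x | [&& x != a, x != b & x != d]) F x.
Proof.
move=> ab ad bd; rewrite (bigD1 a) //= (bigD1 b) //=; last by rewrite eq_sym.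
rewrite (bigD1 d) //=; last by rewrite eq_sym ad eq_sym.
rewrite !addnA; congr (_ + _ + _ + _); apply: eq_bigl => x.
by case: (x != a); case: (x != b); case: (x != d).
Qed.
Lemma fcnt_sum n c (s : 'S_(2 * n)) : fcnt c s = \sum_x (c x (s x) : nat).
Proof. by rewrite /fcnt card_set_sum. Qed.

Lemma move2 n c (s : 'S_(2 * n)) a b : a != b ->
  fcnt c (tperm a b * s)%g + (c a (s a) + c b (s b)) =
  fcnt c s + (c a (s b) + c b (s a)).
Proof.
move=> ab; rewrite !fcnt_sum (sum2 _ ab) [in RHS](sum2 _ ab) !permM !tpermL !tpermR.
rewrite (eq_bigr (fun x => (c x (s x) : nat))); first by set S := (\sum_(_ | _) _); lia.
by move=> x /andP[xa xb]; rewrite permM tpermD // eq_sym.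
Qed.

Lemma move3 n c (s : 'S_(2 * n)) a b d : a != b -> a != d -> b != d ->
  fcnt c (tperm a b * tperm a d * s)%g + (c a (s a) + c b (s b) + c d (s d)) =
  fcnt c s + (c a (s b) + c b (s d) + c d (s a)).
Proof.
move=> ab ad bd; rewrite !fcnt_sum (sum3 _ ab ad bd) [in RHS](sum3 _ ab ad bd) !permM.
have h1 : tperm a d b = b by rewrite tpermD // eq_sym.
have h2 : tperm a b d = d by rewrite tpermD.
rewrite tpermL h1 tpermR tpermL h2 tpermR.
rewrite (eq_bigr (fun x => (c x (s x) : nat))); first by set S := (\sum_(_ | _) _); lia.
by move=> x /and3P[xa xb xd]; rewrite !permM !tpermD // eq_sym.
Qed.
Lemma fcnt_le n c (s : 'S_(2 * n)) : fcnt c s <= 2 * n.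
Proof. by rewrite /fcnt -[X in _ <= X]card_ord max_card. Qed.

Lemma card_setC_pred (T : finType) (P : pred T) :
  #|[set x | ~~ P x]| = #|T| - #|[set x | P x]|.
Proof.
have -> : [set x | ~~ P x] = ~: [set x | P x] by apply/setP => x; rewrite !inE.
by rewrite cardsCs setCK.
Qed.

Lemma fcnt_neg n c (s : 'S_(2 * n)) :
  fcnt (fun i j => ~~ c i j) s = 2 * n - fcnt c s.
Proof. by rewrite /fcnt card_setC_pred card_ord. Qed.

Lemma balanced_neg n c : @balanced n c -> balanced (fun i j => ~~ c i j).
Proof.
case=> H1 H2; split=> i; split.
- exact: (proj2 (H1 i)).
- have e : [set j | ~~ ~~ c i j] = [set j | c i j] by apply/setP=> j; rewrite !inE negbK.
  by rewrite e (proj1 (H1 i)).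
- exact: (proj2 (H2 i)).
- have e : [set j | ~~ ~~ c j i] = [set j | c j i] by apply/setP=> j; rewrite !inE negbK.
  by rewrite e (proj1 (H2 i)).
Qed.

Lemma down n c (bal : @balanced n c) (s : 'S_(2 * n)) :
  0 < fcnt c s -> exists t, fcnt c t < fcnt c s <= fcnt c t + 2.
Proof.
move=> hpos.
have [q cq] : exists q, c q (s q).
  by move: hpos; rewrite /fcnt card_gt0 => /set0Pn [q]; rewrite inE; exists q.
set S := [set r | ~~ c q (s r)].
set T := [set r | ~~ c r (s q)].
have cS : #|S| = n.
  by rewrite /S (card_perm_set (fun x => ~~ c q x)) (proj2 ((proj1 bal) q)).
have cT : #|T| = n by rewrite /T (proj2 ((proj2 bal) (s q))).
have sub : S :|: T \subset [set~ q].
  apply/subsetP => x; rewrite !inE => /orP [] h; apply/eqP => e; move: h; rewrite e cq //.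
have := subset_leq_card sub; rewrite cardsC1 card_ord => le1.
have := cardsUI S T; rewrite cS cT => e.
have := ltn_ord q => hq.
have : 0 < #|S :&: T| by lia.
rewrite card_gt0 => /set0Pn [r]; rewrite !inE => /andP [h1 h2].
have qr : q != r by apply/eqP => e0; move: h1; rewrite -e0 cq.
exists (tperm q r * s)%g.
have := move2 c s qr; rewrite cq (negbTE h1) (negbTE h2).
set X := fcnt c (_ * _)%g.
by case: (c r (s r)) => /=; lia.
Qed.

Lemma exists0 n c (bal : @balanced n c) : exists s : 'S_(2 * n), fcnt c s = 0.
Proof.
suff H : forall v (s : 'S_(2 * n)), fcnt c s <= v -> exists t, fcnt c t = 0.
  exact: (H _ 1%g (leqnn _)).
elim=> [|v IH] s hs; first by exists s; lia.
case: (posnP (fcnt c s)) => [h|h]; first by exists s.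
have [t /andP [ht1 ht2]] := down bal h; apply: (IH t); lia.
Qed.

Lemma ivt n c (bal : @balanced n c) t : t <= 2 * n ->
  exists s : 'S_(2 * n), t <= fcnt c s <= t.+1.
Proof.
elim: t => [|t IH] ht.
  by have [s hs] := exists0 bal; exists s; rewrite hs.
have [s /andP [h1 h2]] := IH (ltnW ht).
case: (ltnP t (fcnt c s)) => h3.
  by exists s; apply/andP; split; lia.
have h4 : fcnt c s = t by lia.
have hpos : 0 < fcnt (fun i j => ~~ c i j) s by rewrite fcnt_neg; lia.
have [u /andP [hu1 hu2]] := down (balanced_neg bal) hpos.
move: hu1 hu2; rewrite !fcnt_neg => hu1 hu2.
have := fcnt_le c u; have := fcnt_le c s => l1 l2.
by exists u; apply/andP; split; lia.
Qed.
Definition xorlike n (c : 'I_(2 * n) -> 'I_(2 * n) -> bool) :=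
  exists u v : 'I_(2 * n) -> bool, forall i j, c i j = u i (+) v j.

Section Struct.
Variables (n : nat) (c : 'I_(2 * n) -> 'I_(2 * n) -> bool) (k : nat) (s : 'S_(2 * n)).
Hypotheses (bal : balanced c) (k0 : 0 < k) (kn : k <= n) (fs : fcnt c s = k.-1)
  (nok : forall t, fcnt c t != k).
Local Notation N x y := (c x (s y)).

Lemma F1 r t : ~~ N r r -> ~~ N t t -> N r t = N t r.
Proof.
move=> hr ht; case: (eqVneq r t) => [-> //|rt].
have := move2 c s rt; have := nok (tperm r t * s)%g; rewrite (negbTE hr) (negbTE ht) fs.
set X := fcnt c _.
by case: (N r t); case: (N t r) => //= /eqP h1 h2; exfalso; lia.
Qed.

Lemma F2 r t u : ~~ N r r -> ~~ N t t -> ~~ N u u -> ~~ N r t -> ~~ N t u -> ~~ N r u.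
Proof.
move=> hr ht hu hrt htu.
case: (eqVneq r t) => [e|rt]; first by rewrite e.
case: (eqVneq t u) => [e|tu]; first by rewrite -e.
case: (eqVneq r u) => [e|ru]; first by rewrite e.
rewrite (F1 hr hu).
have := move3 c s rt ru tu; have := nok (tperm r t * tperm r u * s)%g.
rewrite (negbTE hr) (negbTE ht) (negbTE hu) (negbTE hrt) (negbTE htu) fs.
set X := fcnt c _.
by case: (N u r) => //= /eqP h1 h2; exfalso; lia.
Qed.

Lemma Q1 q r t : N q q -> ~~ N r r -> ~~ N t t -> N r t -> N q r = N t q.
Proof.
move=> hq hr ht hrt.
have rt : r != t by apply/eqP => e; move: hr; rewrite e; move: hrt; rewrite e => ->.
have qr : q != r by apply/eqP => e; move: hr; rewrite -e hq.
have qt : q != t by apply/eqP => e; move: ht; rewrite -e hq.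
have := move3 c s qr qt rt; have := nok (tperm q r * tperm q t * s)%g.
rewrite hq (negbTE hr) (negbTE ht) hrt fs.
set X := fcnt c _.
by case: (N q r); case: (N t q) => //= /eqP h1 h2; exfalso; lia.
Qed.

Lemma Q2 q r t : N q q -> ~~ N r r -> ~~ N t t -> ~~ N r t -> ~~ (N q r && N t q).
Proof.
move=> hq hr ht hrt.
have qr : q != r by apply/eqP => e; move: hr; rewrite -e hq.
have qt : q != t by apply/eqP => e; move: ht; rewrite -e hq.
case: (eqVneq r t) => [e|rt].
  rewrite -e; have := move2 c s qr; have := nok (tperm q r * s)%g.
  rewrite hq (negbTE hr) fs.
  set X := fcnt c _.
  by case: (N q r); case: (N r q) => //= /eqP h1 h2; exfalso; lia.
have := move3 c s qr qt rt; have := nok (tperm q r * tperm q t * s)%g.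
rewrite hq (negbTE hr) (negbTE ht) (negbTE hrt) fs.
set X := fcnt c _.
by case: (N q r); case: (N t q) => //= /eqP h1 h2; exfalso; lia.
Qed.

Lemma R1 p q r : N p p -> N q q -> p != q -> ~~ N r r -> ~~ [&& N r p, N p q & N q r].
Proof.
move=> hp hq pq hr.
have rp : r != p by apply/eqP => e; move: hr; rewrite e hp.
have rq : r != q by apply/eqP => e; move: hr; rewrite e hq.
have := move3 c s rp rq pq; have := nok (tperm r p * tperm r q * s)%g.
rewrite hp hq (negbTE hr) fs.
set X := fcnt c _.
by case: (N r p); case: (N p q); case: (N q r) => //= /eqP h1 h2; exfalso; lia.
Qed.


Lemma Q3 q : N q q -> exists t, ~~ N t t && N t q.
Proof.
move=> hq; have [/existsP [t ht]|/existsPn H] := boolP [exists t, ~~ N t t && N t q].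
  by exists t.
exfalso.
have sub : [set x | N x q] \subset [set x | N x x].
  apply/subsetP => x; rewrite !inE => hx; move: (H x); rewrite hx andbT; by move/negPn.
have := subset_leq_card sub; rewrite (proj1 ((proj2 bal) (s q))).
by rewrite -/(fcnt c s) fs; lia.
Qed.

Lemma exij : exists i j, [&& ~~ N i i, ~~ N j j & N i j].
Proof.
have cB : #|[set x | ~~ N x x]| = 2 * n - k.-1.
  by rewrite card_setC_pred card_ord -/(fcnt c s) fs.
have : 0 < #|[set x | ~~ N x x]| by rewrite cB; lia.
rewrite card_gt0 => /set0Pn [r]; rewrite inE => hr.
exists r.
have [/existsP [t ht]|/existsPn H] := boolP [exists t, ~~ N t t && N r t].
  by exists t; rewrite hr.
exfalso.
have sub : [set x | ~~ N x x] \subset [set x | ~~ N r x].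
  apply/subsetP => x; rewrite !inE => hx; move: (H x); rewrite hx /=; done.
have := subset_leq_card sub.
rewrite cB (card_perm_set (fun x => ~~ c r x)) (proj2 ((proj1 bal) r)); lia.
Qed.

Lemma RD r t u : ~~ N r r -> ~~ N t t -> ~~ N u u -> N r t -> ~~ N t u -> N r u.
Proof.
move=> hr ht hu hrt htu; apply/negPn/negP => hru.
have h := F2 hr hu ht hru; rewrite (F1 hu ht) in h; have := h htu; by rewrite hrt.
Qed.

Lemma RD' r t u : ~~ N r r -> ~~ N t t -> ~~ N u u -> ~~ N r t -> N t u -> N r u.
Proof.
move=> hr ht hu hrt htu; apply/negPn/negP => hru.
have h := F2 ht hr hu; rewrite (F1 ht hr) in h; have := h hrt hru; by rewrite htu.
Qed.

Lemma Zl q a b : N q q -> ~~ N a a -> ~~ N b b -> N a b -> ~~ N a q -> ~~ N b q -> False.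
Proof.
move=> hq ha hb hab haq hbq.
have e1 := Q1 hq ha hb hab; rewrite (negbTE hbq) in e1.
have hba : N b a by rewrite (F1 hb ha).
have e2 := Q1 hq hb ha hba; rewrite (negbTE haq) in e2.
have [t /andP [ht htq]] := Q3 hq.
case: (boolP (N a t)) => hat.
  by have := Q1 hq ha ht hat; rewrite e1 htq.
have hbt := RD hb ha ht hba hat.
by have := Q1 hq hb ht hbt; rewrite e2 htq.
Qed.

Lemma struct_xor : xorlike c.
Proof.
have [i [j /and3P [hi hj hij]]] := exij.
have hji : N j i by rewrite (F1 hj hi).
have rowX : forall r t, N r t = N r i (+) N i t.
  move=> r.
  have cN : #|[set t | N r t]| = n.
    by rewrite (card_perm_set (fun x => c r x)) (proj1 ((proj1 bal) r)).
  have cX : #|[set t | N r i (+) N i t]| = n.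
    case: (N r i) => /=.
      by rewrite (card_perm_set (fun x => ~~ c i x)) (proj2 ((proj1 bal) i)).
    by rewrite (card_perm_set (fun x => c i x)) (proj1 ((proj1 bal) i)).
  case: (boolP (N r r)) => hr.
  - have sub : [set t | N r t] \subset [set t | N r i (+) N i t].
      apply/subsetP => t; rewrite !inE => hrt.
      case: (boolP (N t t)) => ht.
      + case hri: (N r i); case hit: (N i t) => //=.
        * case: (eqVneq r t) => [e|rt].
            move: hit; rewrite -e => hir; have := Q2 hr hi hi hi; by rewrite hri hir.
          have := R1 hr ht rt hj.
          by rewrite -(Q1 hr hi hj hij) (Q1 ht hj hi hji) hri hrt hit.
        * have hip : N i r.
            apply/negPn/negP => hip; apply: (Zl hr hi hj hij hip).
            by rewrite -(Q1 hr hi hj hij) hri.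
          have hjt : N j t.
            apply/negPn/negP => hjt; exact: (Zl ht hj hi hji hjt (negbT hit)).
          have hti : N t i by rewrite (Q1 ht hi hj hij).
          case: (eqVneq r t) => [e|rt].
            by move: hri; rewrite e hti.
          by have := R1 hr ht rt hi; rewrite hip hrt hti.
      + case hit: (N i t); rewrite ?addbT ?addbF.
        * apply/negP => hri.
          have hti : N t i by rewrite (F1 ht hi).
          have e := Q1 hr ht hi hti.
          by have := Q2 hr hi hi hi; rewrite hri -e hrt.
        * apply/negPn/negP => hri.
          have e1 := Q1 hr hi hj hij; rewrite (negbTE hri) in e1.
          have hti : ~~ N t i by rewrite (F1 ht hi) hit.
          have htj := RD' ht hi hj hti hij.
          by have := Q1 hr ht hj htj; rewrite hrt -e1.
    have := (subset_cardP (etrans cN (esym cX))); move/(_ sub) => E t.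
    by have := E t; rewrite !inE.
  - have sub : [set t | N r i (+) N i t] \subset [set t | N r t].
      apply/subsetP => t; rewrite !inE.
      case: (boolP (N t t)) => ht.
      + case hri: (N r i); case hit: (N i t) => //= _.
        * apply/negPn/negP => hrt; exact: (Zl ht hr hi hri hrt (negbT hit)).
        * have hjr : N j r by rewrite (F1 hj hr); exact: (RD' hr hi hj (negbT hri) hij).
          have e1 := Q1 ht hj hi hji; have e2 := Q1 ht hj hr hjr.
          by rewrite -e2 e1 hit.
      + case hri: (N r i); case hit: (N i t) => //= _.
        * exact: (RD hr hi ht hri (negbT hit)).
        * exact: (RD' hr hi ht (negbT hri) hit).
    have := (subset_cardP (etrans cX (esym cN))); move/(_ sub) => E t.
    by have := E t; rewrite !inE.
exists (fun r => c r (s i)), (fun col => c i col) => r col.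
by have := rowX r (s^-1 col)%g; rewrite permKV.
Qed.

End Struct.
Lemma xor_cards n c (bal : @balanced n c) (u v : 'I_(2 * n) -> bool) :
  0 < n -> (forall i j, c i j = u i (+) v j) ->
  #|[set j | v j]| = n /\ #|[set i | u i]| = n.
Proof.
move=> n0 huv; have h0 : 0 < 2 * n by lia.
set o := Ordinal h0.
split.
  have := proj1 ((proj1 bal) o).
  case ho: (u o).
    have -> : [set j | c o j] = [set j | ~~ v j] by apply/setP => j; rewrite !inE huv ho.
    by rewrite card_setC_pred card_ord; lia.
  have -> : [set j | c o j] = [set j | v j] by apply/setP => j; rewrite !inE huv ho.
  done.
have := proj1 ((proj2 bal) o).
case ho: (v o).
  have -> : [set i | c i o] = [set i | ~~ u i] by apply/setP => j; rewrite !inE huv ho addbT.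
  by rewrite card_setC_pred card_ord; lia.
have -> : [set i | c i o] = [set i | u i] by apply/setP => j; rewrite !inE huv ho addbF.
done.
Qed.

Lemma xor_even n c (bal : @balanced n c) (s : 'S_(2 * n)) :
  0 < n -> xorlike c -> ~~ odd (fcnt c s).
Proof.
move=> n0 [u [v huv]].
have [cv cu] := xor_cards bal n0 huv.
have cv' : #|[set i | v (s i)]| = n by rewrite (card_perm_set v).
have E : fcnt c s + 2 * #|[set i | u i && v (s i)]| = #|[set i | u i]| + #|[set i | v (s i)]|.
  rewrite /fcnt !card_set_sum big_distrr -!big_split /=.
  by apply: eq_bigr => i _; rewrite huv; case: (u i); case: (v (s i)).
have -> : fcnt c s = 2 * (n - #|[set i | u i && v (s i)]|) by lia.
by rewrite oddM.
Qed.

Lemma xor_disc n c (bal : @balanced n c) :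
  0 < n -> xorlike c -> exists x y, ~~ connect (blue_adj c) x y.
Proof.
move=> n0 [u [v huv]].
have [cv cu] := xor_cards bal n0 huv.
have [i1 hi1] : exists i, u i.
  have : 0 < #|[set i | u i]| by lia.
  by rewrite card_gt0 => /set0Pn [i]; rewrite inE; exists i.
have [i0 hi0] : exists i, ~~ u i.
  have : 0 < #|[set i | ~~ u i]| by rewrite card_setC_pred card_ord; lia.
  by rewrite card_gt0 => /set0Pn [i]; rewrite inE; exists i.
exists (inl i0), (inl i1); apply/negP => con.
pose p : pred (vtx n) := fun z => match z with inl i => u i | inr j => v j end.
have cl : closed (blue_adj c) p.
  move=> [a|a] [b|b] //=; rewrite !unfold_in /p /= huv; [by case: (u a); case: (v b) | by case: (u b); case: (v a)].
by have := closed_connect cl con; rewrite !unfold_in /p /= (negbTE hi0) hi1.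
Qed.

Lemma disc_xor n c (bal : @balanced n c) (x y : vtx n) :
  0 < n -> ~~ connect (blue_adj c) x y -> xorlike c.
Proof.
move=> n0 nxy.
set e := blue_adj c.
have esy : forall a b, e a b = e b a by move=> [a|a] [b|b].
pose u i := connect e x (inl i).
pose v j := connect e x (inr j).
have m1 : forall i j, u i -> ~~ v j -> c i j.
  move=> i j hu hv; apply/negPn/negP => hc; move/negP: hv; apply.
  by apply: (connect_trans hu); apply: connect1.
have m2 : forall i j, ~~ u i -> v j -> c i j.
  move=> i j hu hv; apply/negPn/negP => hc; move/negP: hu; apply.
  by apply: (connect_trans hv); apply: connect1.
have colblue : forall j, exists i, ~~ c i j.
  move=> j; have : 0 < #|[set i | ~~ c i j]| by rewrite (proj2 ((proj2 bal) j)).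
  by rewrite card_gt0 => /set0Pn [i]; rewrite inE; exists i.
have [i1 hi1] : exists i, u i.
  case: x nxy @u @v m1 m2 => [i|j] nxy u v m1 m2.
    by exists i; rewrite /u connect0.
  have [i hi] := colblue j; exists i; rewrite /u; apply: connect1.
  by rewrite /e /=.
have [i0 hi0] : exists i, ~~ u i.
  case: y nxy => [i|j] nxy; first by exists i.
  have [i hi] := colblue j; exists i; apply/negP => hu; move/negP: nxy; apply.
  by apply: (connect_trans hu); apply: connect1.
have s1 : [set j | ~~ v j] \subset [set j | c i1 j].
  by apply/subsetP => j; rewrite !inE => hv; apply: m1.
have s0 : [set j | v j] \subset [set j | c i0 j].
  by apply/subsetP => j; rewrite !inE => hv; apply: m2.
have l1 := subset_leq_card s1; have l0 := subset_leq_card s0.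
rewrite (proj1 ((proj1 bal) i1)) in l1; rewrite (proj1 ((proj1 bal) i0)) in l0.
have := card_setC_pred v; rewrite card_ord => hc.
have cv : #|[set j | v j]| = n by lia.
have cnv : #|[set j | ~~ v j]| = n by lia.
exists u, v => i j.
case: (boolP (u i)) => hu.
  have si : [set j | ~~ v j] \subset [set j | c i j].
    by apply/subsetP => j'; rewrite !inE => hv; apply: m1.
  have := subset_cardP (etrans cnv (esym (proj1 ((proj1 bal) i)))) si.
  by move/(_ j); rewrite !inE /= => <-.
have si : [set j | v j] \subset [set j | c i j].
  by apply/subsetP => j'; rewrite !inE => hv; apply: m2.
have := subset_cardP (etrans cv (esym (proj1 ((proj1 bal) i)))) si.
by move/(_ j); rewrite !inE /= => <-.
Qed.
Lemma exists_k n c (bal : @balanced n c) k :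
  0 < k -> k <= n -> ~ xorlike c -> exists s, fcnt c s = k.
Proof.
move=> k0 kn nx.
have [s /andP [h1 h2]] := ivt bal (t := k.-1) (ltac:(lia)).
have [/existsP [t /eqP ht]|/existsPn H] := boolP [exists t, fcnt c t == k].
  by exists t.
exfalso; apply: nx.
have fs : fcnt c s = k.-1.
  have := H s; move/eqP => hs; lia.
exact: (struct_xor bal k0 kn fs H).
Qed.

Theorem corollary1 (n k : nat) (red : 'I_(2 * n) -> 'I_(2 * n) -> bool) :
  odd k -> k <= 2 * n -> balanced red ->
  ((exists s : 'S_(2 * n), matching_with_k_red k red s) <-> blue_connected red).
Proof.
move=> ok k2n bal.
have k0 : 0 < k by case: k ok k2n.
have n0 : 0 < n by lia.
split.
  move=> [s [h1 _]] x y; apply/negPn/negP => hn.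
  have xl := disc_xor bal n0 hn.
  have := xor_even bal s n0 xl.
  by rewrite /fcnt h1 ok.
move=> conn.
have nx : forall c', @balanced n c' -> (forall i j, c' i j = ~~ red i j) -> ~ xorlike c'.
  move=> c' bal' hc' [u [v huv]].
  have [x [y hxy]] : exists x y, ~~ connect (blue_adj red) x y.
    apply: (xor_disc bal n0); exists (fun i => ~~ u i), v => i j.
    by rewrite -[red i j]negbK -hc' huv; case: (u i); case: (v j).
  by move: hxy; rewrite conn.
have nx0 : ~ xorlike red.
  move=> [u [v huv]]; apply: (nx _ (balanced_neg bal) (fun i j => erefl)).
  by exists (fun i => ~~ u i), v => i j; rewrite huv; case: (u i); case: (v j).
have [s hs] : exists s, fcnt red s = k.
  case: (leqP k n) => kn.
    exact: (exists_k bal k0 kn nx0).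
  have k2 : k < 2 * n.
    rewrite ltn_neqAle k2n andbT; apply/eqP => e; move: ok; rewrite e oddM //.
  have [s hs] := exists_k (balanced_neg bal) (k := 2 * n - k) (ltac:(lia)) (ltac:(lia))
    (nx _ (balanced_neg bal) (fun i j => erefl)).
  exists s; move: hs; rewrite fcnt_neg; have := fcnt_le red s; lia.
exists s; split; first exact: hs.
have h := fcnt_neg red s; rewrite hs in h; exact: h.
Qed.
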